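(* Let $\phi(z)\in\mathbb{R}[z]$ be a cubic polynomial with positive lead coefficient. If $\phi$ has precisely one real fixed point $\gamma\in\mathbb{R}$, then $\mathfrak{K}_\infty\cap\mathbb{R}=\{\gamma\}$.
   Context: The (archimedean) filled Julia set of $\phi$ is $\mathfrak{K}_\infty=\{x\in\mathbb{C}:\{|\phi^n(x)|:n\ge0\}\text{ is bounded}\}$, where $\phi^n$ is the $n$-th iterate of $\phi$. *)

(* Defs.v *)
From HB Require Import structures.
From mathcomp Require Import all_boot all_order all_algebra.
From mathcomp Require Import reals.
From mathcomp.real_closed Require Import complex.
Set Implicit Arguments.
Unset Strict Implicit.
Unset Printing Implicit Defensive.
Import Order.TTheory GRing.Theory Num.Theory.
Local Open Scope ring_scope.
Local Open Scope complex_scope.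

Definition filled_julia_inf (R : realType) (phi : {poly R}) (x : R[i]) : Prop :=
  exists M : R, forall n : nat,
    `| iter n (fun z => (map_poly (real_complex R) phi).[z]) x | <= M%:C.

(* Main.v *)
Require Import Defs.
From HB Require Import structures.
From mathcomp Require Import all_boot all_order all_algebra.
From mathcomp Require Import reals.
From mathcomp.real_closed Require Import complex.
From mathcomp Require Import ring lra.
Import Order.TTheory GRing.Theory Num.Theory.
Local Open Scope ring_scope.
Local Open Scope complex_scope.

Lemma hexp (R : realType) (phi : {poly R}) y : size phi = 4%N ->
  phi.[y] = phi`_0 + phi`_1 * y + phi`_2 * y^+2 + phi`_3 * y^+3.
Proof. move=> hs; rewrite horner_coef hs !big_ord_recr big_ord0 /=. ring. Qed.

Lemma orbit_real (R : realType) (phi : {poly R}) (x : R) n :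
  iter n (fun z => (map_poly (real_complex R) phi).[z]) (x%:C)
  = (iter n (fun y => phi.[y]) x)%:C.
Proof. by elim: n => //= n ->; rewrite horner_map. Qed.

Lemma norm_realC (R : realType) (r : R) : `|r%:C| = `|r|%:C.
Proof. by rewrite normc_def /= expr0n /= addr0 sqrtr_sqr. Qed.

Section Key.
Variable R : realType.
Variables a3 B C : R.
Hypothesis a3pos : 0 < a3.
Hypothesis uniq0 : forall t, t * (a3 * t ^+ 2 + B * t + C) = 0 -> t = 0.

Lemma q_root t : (2 * a3 * t + B) ^+ 2 = B ^+ 2 - 4 * a3 * C -> t = 0.
Proof.
move=> h; apply: uniq0.
have : 4 * a3 * (a3 * t ^+ 2 + B * t + C) = 0.
  by rewrite -[RHS](subrr (B ^+ 2 - 4 * a3 * C)) -[X in _ = X - _]h; ring.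
move/eqP; rewrite !mulf_eq0 (gt_eqF a3pos) orbF => /orP [/eqP h4|/eqP ->];
  last by rewrite mulr0.
by move: h4; lra.
Qed.

Lemma D_ge0 : 0 <= 4 * a3 * C - B ^+ 2.
Proof.
rewrite leNgt; apply/negP => hD.
set s := Num.sqrt (B ^+ 2 - 4 * a3 * C).
have hs : 0 < s by rewrite sqrtr_gt0; lra.
have hs2 : s ^+ 2 = B ^+ 2 - 4 * a3 * C by rewrite sqr_sqrtr //; lra.
have a3n : a3 != 0 by rewrite gt_eqF.
have r1 : (- B + s) / (2 * a3) = 0.
  by apply: q_root; rewrite -hs2; congr (_ ^+ 2); field.
have r2 : (- B - s) / (2 * a3) = 0.
  by apply: q_root; rewrite -hs2 -sqrrN; congr (_ ^+ 2); field.
have : (- B + s) / (2 * a3) - (- B - s) / (2 * a3) = s / a3.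
  by field.
rewrite r1 r2 subrr => /esym/eqP; rewrite mulf_eq0 invr_eq0 (negPf a3n) orbF.
by rewrite gt_eqF.
Qed.

Lemma D_eq0 : 4 * a3 * C - B ^+ 2 = 0 -> B = 0 /\ C = 0.
Proof.
move=> hD.
have a3n : a3 != 0 by rewrite gt_eqF.
have r : - B / (2 * a3) = 0.
  apply: q_root.
  have -> : 2 * a3 * (- B / (2 * a3)) + B = 0 by field.
  by rewrite expr2 mul0r; lra.
have hB : B = 0.
  have e : B = - (2 * a3) * (- B / (2 * a3)) by field.
  by rewrite e r mulr0.
split => //.
have h4 : 4 * a3 * C = 0 by move: hD; rewrite hB expr2 mul0r subr0.
have e : C = 4 * a3 * C / (4 * a3) by field.
by rewrite e h4 mul0r.
Qed.

Lemma key_bound (t0 : R) : t0 != 0 -> exists m, 0 < m /\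
  forall t : R, t0 ^+ 2 <= t0 * t -> m <= t0 * (t * (a3 * t ^+ 2 + B * t + C)).
Proof.
move=> t0n; have a3p : 0 < a3 := a3pos.
have t02 : 0 < t0 ^+ 2 by rewrite lt_def sqr_ge0 andbT expf_neq0.
have hD := D_ge0; move: hD; rewrite le_eqVlt => /orP [/eqP hD|hD].
- have [hB hC] := D_eq0 (esym hD).
  have e4 : t0 ^+ 4 = t0 ^+ 2 * t0 ^+ 2 by ring.
  exists (a3 * t0 ^+ 4); split; first by rewrite e4; apply: mulr_gt0 => //; apply: mulr_gt0.
  move=> t ht; rewrite hB hC.
  have h1 : t0 ^+ 2 * t0 ^+ 2 <= (t0 * t) * (t0 * t).
    by apply: ler_pM; rewrite ?sqr_ge0.
  have h2 : t0 ^+ 2 <= t ^+ 2.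
    rewrite -(ler_pM2l t02); apply: (le_trans h1); rewrite le_eqVlt; apply/orP; left; apply/eqP; ring.
  have -> : t0 * (t * (a3 * t ^+ 2 + 0 * t + 0)) = a3 * ((t0 * t) * t ^+ 2) by ring.
  rewrite e4 ler_pM2l //; by apply: ler_pM; rewrite ?sqr_ge0.
- exists (t0 ^+ 2 * ((4 * a3 * C - B ^+ 2) / (4 * a3))); split.
    rewrite mulr_gt0 // divr_gt0 //. lra.
  move=> t ht.
  have hq : (4 * a3 * C - B ^+ 2) / (4 * a3) <= a3 * t ^+ 2 + B * t + C.
    rewrite ler_pdivrMr; last by lra.
    have : 0 <= (2 * a3 * t + B) ^+ 2 by rewrite sqr_ge0.
    move=> h; nra.
  rewrite [X in _ <= X]mulrA; apply: ler_pM; rewrite ?sqr_ge0 //.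
  apply: divr_ge0; lra.
Qed.
End Key.

Theorem lemma4p9 (R : realType) (phi : {poly R}) (gamma : R) :
  size phi = 4%N -> 0 < lead_coef phi ->
  phi.[gamma] = gamma -> (forall x : R, phi.[x] = x -> x = gamma) ->
  forall x : R, filled_julia_inf phi (x%:C) <-> x = gamma.
Proof.
move=> hs hlc hg huniq x.
have a3E : lead_coef phi = phi`_3 by rewrite lead_coefE hs.
set a3 := phi`_3 in a3E; rewrite a3E in hlc.
set B := 3 * a3 * gamma + phi`_2.
set C := 3 * a3 * gamma ^+ 2 + 2 * phi`_2 * gamma + phi`_1 - 1.
have gE : forall y, phi.[y] = y + (y - gamma) *
   (a3 * (y - gamma) ^+ 2 + B * (y - gamma) + C).
  move=> y; move: hg; rewrite !hexp // /B /C /a3 => hg.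
  have a0e : phi`_0 = gamma - phi`_1 * gamma - phi`_2 * gamma ^+ 2
                     - phi`_3 * gamma ^+ 3 by lra.
  rewrite a0e; ring.
have uniq0 : forall t, t * (a3 * t ^+ 2 + B * t + C) = 0 -> t = 0.
  move=> t ht; have := huniq (gamma + t).
  rewrite gE (_ : gamma + t - gamma = t); last by ring.
  rewrite ht addr0 => /(_ erefl) h.
  have e : t = (gamma + t) - gamma by ring.
  by rewrite e h subrr.
split; last first.
  move=> ->; exists `|gamma| => n.
  rewrite orbit_real norm_realC lecR.
  have -> : iter n (fun y => phi.[y]) gamma = gamma by elim: n => //= n ->.
  by [].
case=> M hM; apply/eqP; apply/negPn/negP => hx.
set t0 := x - gamma.
have t0n : t0 != 0 by rewrite subr_eq0.
have [m [mpos hm]] := @key_bound R a3 B C hlc uniq0 t0 t0n.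
set y := fun n => iter n (fun y => phi.[y]) x.
have hy : forall n : nat, t0 ^+ 2 <= t0 * (y n - gamma) /\ n%:R * m <= t0 * (y n - x).
  elim=> [|n [IH1 IH2]].
    by rewrite /y /= mul0r subrr mulr0 /t0 expr2 lexx.
  have ys : y n.+1 = phi.[y n] by [].
  have := hm _ IH1; rewrite ys gE => h.
  rewrite -natr1; split; lra.
have hb : forall n : nat, n%:R * m <= `|t0| * (M + `|x|).
  move=> n; apply: (le_trans (proj2 (hy n))).
  apply: (le_trans (ler_norm _)); rewrite normrM ler_wpM2l //.
  apply: (le_trans (ler_normB _ _)); rewrite lerD2r.
  by move: (hM n); rewrite orbit_real norm_realC lecR.
set K := `|t0| * (M + `|x|).
have K0 : 0 <= K by apply: (le_trans _ (hb 0%N)); rewrite mul0r.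
have := archi_boundP (divr_ge0 K0 (ltW mpos)).
rewrite ltr_pdivrMr // => hK.
by have := lt_le_trans hK (hb _); rewrite ltxx.
Qed.
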